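(* Let $(Q,P)$ be a weakly quasi-lattice ordered group and let $\Lambda$ be a $P$-graph with $\mathrm{FA}(\Lambda)\neq\emptyset$. For any $\lambda\in\Lambda$, the following are equivalent: (1) $\lambda\in\mathrm{FA}(\Lambda)$; (2) the set $Z(\lambda)=\{x\in\mathcal{F}(\Lambda):\lambda\in x\}$ is compact.
   Context: $(Q,P)$ weakly quasi-lattice ordered: $Q$ a discrete group, $P\subseteq Q$ a subsemigroup containing the identity $e$ with $P\cap P^{-1}=\{e\}$, and, with $p\le r$ meaning $pq=r$ for some $q\in P$, any two elements of $P$ with a common upper bound have a least common upper bound. A $P$-graph is a countable small category $\Lambda$ (range/source $r,s$) with a functor $d:\Lambda\to P$ with unique factorisation (if $d(\lambda)=pq$ there are unique $\mu,\nu$ with $\lambda=\mu\nu$, $d(\mu)=p$, $d(\nu)=q$). Write $\lambda\Lambda=\{\lambda\mu: s(\lambda)=r(\mu)\}$, $\mu\preceq\lambda$ iff $\lambda\in\mu\Lambda$. $\mathrm{FA}(\Lambda)$ is the set of $\lambda$ such that for all $\mu\in\lambda\Lambda,\nu\in\Lambda$ there is a finite $J\subseteq\Lambda$ with $\mu\Lambda\cap\nu\Lambda=\bigcup_{\kappa\in J}\kappa\Lambda$. A filter is a nonempty subset $x\subseteq\Lambda$ that is hereditary ($\lambda\preceq\mu\in x\Rightarrow\lambda\in x$) and directed ($\mu,\nu\in x$ implies some $\lambda\in x$ with $\mu,\nu\preceq\lambda$); $\mathcal{F}(\Lambda)$ is the set of filters, with the subspace topology from $\mathcal{P}(\Lambda)$,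 which carries the product topology from $\{0,1\}^\Lambda$ (basis: $\{x: K_1\subseteq x\subseteq\Lambda\setminus K_2\}$ for finite $K_1,K_2$). *)

(* Defs.v *)
(* the topology on P(Lambda) is the product
   (pointwise) topology {ptws Mor -> bool}, bool being discrete. *)
From HB Require Import structures.
From mathcomp Require Import all_boot all_order all_algebra.
From mathcomp Require Import all_classical all_reals all_analysis.

Set Implicit Arguments.
Unset Strict Implicit.
Unset Printing Implicit Defensive.

Local Open Scope classical_set_scope.

Definition Ple {Q : Type} (mul : Q -> Q -> Q) (P : Q -> Prop) (p r : Q) : Prop :=
  exists q, P q /\ mul p q = r.

Record wqlo_group := WQLOGroup {
  Q :> Type;
  gmul : Q -> Q -> Q;
  gone : Q;
  ginv : Q -> Q;
  gmulA : forall a b c, gmul a (gmul b c) = gmul (gmul a b) c;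
  gmul1q : forall a, gmul gone a = a;
  gmulq1 : forall a, gmul a gone = a;
  gmulVq : forall a, gmul (ginv a) a = gone;
  gmulqV : forall a, gmul a (ginv a) = gone;
  Pos : Q -> Prop;
  Pos1 : Pos gone;
  PosM : forall a b, Pos a -> Pos b -> Pos (gmul a b);
  Pos_cap_inv : forall a, Pos a -> Pos (ginv a) -> a = gone;
  Pos_wqlo : forall p q, Pos p -> Pos q ->
    (exists r, Pos r /\ Ple gmul Pos p r /\ Ple gmul Pos q r) ->
    exists l, [/\ Pos l, Ple gmul Pos p l, Ple gmul Pos q l &
      forall r, Pos r -> Ple gmul Pos p r -> Ple gmul Pos q r ->
        Ple gmul Pos l r]
}.

(* A countable small category (objects Obj, morphisms Mor, range/source,
   identities, composition comp mu nu = "mu nu", defined when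
   src mu = rng nu) with a degree functor d : Mor -> P having the unique
   factorisation property. *)
Record Pgraph (G : wqlo_group) := PGraph {
  Obj : Type;
  Mor :> Type;
  rng : Mor -> Obj;
  src : Mor -> Obj;
  idm : Obj -> Mor;
  comp : Mor -> Mor -> Mor;
  Mor_countable : exists f : Mor -> nat, injective f;
  src_idm : forall v, src (idm v) = v;
  rng_idm : forall v, rng (idm v) = v;
  src_comp : forall m n, src m = rng n -> src (comp m n) = src n;
  rng_comp : forall m n, src m = rng n -> rng (comp m n) = rng m;
  comp_idl : forall m, comp (idm (rng m)) m = m;
  comp_idr : forall m, comp m (idm (src m)) = m;
  compA : forall a b c, src a = rng b -> src b = rng c ->
    comp a (comp b c) = comp (comp a b) c;
  deg : Mor -> G;
  deg_Pos : forall m, Pos (deg m);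
  deg_idm : forall v, deg (idm v) = gone G;
  deg_comp : forall m n, src m = rng n -> deg (comp m n) = gmul (deg m) (deg n);
  unique_factorisation : forall l (p q : G), Pos p -> Pos q ->
    deg l = gmul p q ->
    exists m n, [/\ src m = rng n, l = comp m n, deg m = p, deg n = q &
      forall m' n', src m' = rng n' -> l = comp m' n' -> deg m' = p ->
        deg n' = q -> m' = m /\ n' = n]
}.

Section PgraphNotions.
Variables (G : wqlo_group) (L : Pgraph G).

Definition ext (l : L) : set L :=
  [set a | exists m : L, src l = rng m /\ a = comp l m].

Definition prec (m l : L) : Prop := ext m l.

Definition FA : set L :=
  [set l | forall m n : L, ext l m ->
     exists J : set L, finite_set J /\ ext m `&` ext n = \bigcup_(k in J) ext k].

(* filters: subsets of Lambda represented by their indicator Mor -> bool *)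
Definition is_filter (x : L -> bool) : Prop :=
  [/\ exists l, x l,
      (forall l m, prec l m -> x m -> x l) &
      (forall m n, x m -> x n -> exists l, [/\ x l, prec m l & prec n l])].

Definition filters : set {ptws L -> bool} := [set x | is_filter x].

Definition Zset (l : L) : set {ptws L -> bool} := [set x | is_filter x /\ x l].

End PgraphNotions.

Arguments ext {G L} l.
Arguments prec {G L} m l.
Arguments FA {G} L.
Arguments is_filter {G L} x.
Arguments filters {G} L.
Arguments Zset {G L} l.

(* Main.v *)
Require Import Defs.
From HB Require Import structures.
From mathcomp Require Import all_boot all_order all_algebra.
From mathcomp Require Import all_classical all_reals all_analysis.
From mathcomp Require Import finmap.
Local Open Scope classical_set_scope.

Definition PX (L : Type) := {ptws L -> bool}.
HB.instance Definition _ (L : Type) := Topological.copy (PX L) {ptws L -> bool}.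
HB.instance Definition _ (L : Type) := isPointed.Build (PX L) (fun _ => true).

Section S.
Variables (G : wqlo_group) (L : Pgraph G).
Local Notation X := {ptws L -> bool}.

Lemma prec_refl (a : L) : prec a a.
Proof. exists (idm (src a)); rewrite rng_idm comp_idr; split=> //. Qed.

Lemma prec_trans (a b c : L) : prec a b -> prec b c -> prec a c.
Proof.
move=> [u [hu ->]] [v [hv ->]].
have hv' : src u = rng v by rewrite -hv src_comp.
exists (Defs.comp u v); split; first by rewrite rng_comp.
by rewrite Defs.compA.
Qed.

Lemma nbhs_coord (x : X) (i : L) : nbhs x [set y : X | y i = x i].
Proof.
have := @proj_continuous {classic L} (fun _ => bool) i x.
move=> /(_ [set x i]) /=; apply; exact: discrete_set1.
Qed.

Lemma compactT : compact [set: X].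
Proof.
have := @tychonoff {classic L} (fun _ => bool) (fun _ => setT) (fun _ => bool_compact).
by congr compact; apply/seteqP; split.
Qed.

Lemma nbhs_coordJ (x : X) (J : set L) : finite_set J ->
  nbhs x [set y : X | forall i, J i -> y i = x i].
Proof.
move=> fJ.
have [D hD] := (@finite_fsetP {classic L} J).1 fJ.
have H := @filter_bigI X {classic L} D (fun i => [set y : X | y i = x i]) (nbhs x) _
  (fun i _ => nbhs_coord x i).
have {}H := H (nbhs_filter x).
apply: (@filterS X (nbhs x) _ _ _ _ H) => y /= hy i Ji; apply: hy; move: Ji; rewrite hD //.
Qed.

Lemma closed_coord (i : L) (b : bool) : closed [set y : X | y i = b].
Proof.
move=> x /(_ _ (nbhs_coord x i)) [y [/= <- ->]] //.
Qed.

Lemma open_coord (i : L) : open [set y : X | y i = true].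
Proof.
rewrite openE => x /= xi; rewrite /interior.
by apply: filterS (nbhs_coord x i) => y /= ->.
Qed.


Lemma Z_closed (l : L) : FA L l -> closed (Zset l : set X).
Proof.
move=> hFA x clx.
have approx : forall J : set L, finite_set J ->
    exists y : X, Zset l y /\ forall i, J i -> y i = x i.
  move=> J fJ; have [y [Zy Jy]] := clx _ (@nbhs_coordJ x J fJ); by exists y.
have xl : x l.
  have [y [[_ yl] hy]] := approx _ (finite_set1 l).
  by rewrite -(hy l erefl).
have her : forall a b, prec a b -> x b -> x a.
  move=> a b hab xb.
  have fJ : finite_set ([set a] `|` [set b]) by rewrite finite_setU; split; exact: finite_set1.
  have [y [[[_ yher _] _] hy]] := approx _ fJ.
  rewrite -(hy a (or_introl erefl)); apply: (yher a b hab).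
  by rewrite (hy b (or_intror erefl)).
have step : forall mu nu, prec l mu -> x mu -> x nu ->
    exists k, [/\ x k, prec mu k & prec nu k].
  move=> mu nu hmu xmu xnu.
  have [J [fJ hJ]] := hFA mu nu hmu.
  case: (pselect (exists2 k, J k & x k)) => [[k Jk xk]| nJ].
    have : (ext mu `&` ext nu) k by rewrite hJ; exists k => //; exact: prec_refl.
    by case=> h1 h2; exists k; split.
  have fJ' : finite_set (J `|` [set mu] `|` [set nu]).
    by rewrite !finite_setU; split; [split|]; rewrite //; exact: finite_set1.
  have [y [[[_ yher ydir] _] hy]] := approx _ fJ'.
  have ymu : y mu by rewrite hy //; left; right.
  have ynu : y nu by rewrite hy //; right.
  have [a [ya hma hna]] := ydir mu nu ymu ynu.
  have : (\bigcup_(k in J) ext k) a by rewrite -hJ.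
  case=> k Jk hka.
  have yk : y k := yher k a hka ya.
  exfalso; apply: nJ; exists k => //.
  by rewrite -(hy k (or_introl (or_introl Jk))).
split => //; split.
- by exists l.
- exact: her.
- move=> m n xm xn.
  have [k1 [xk1 hlk1 hmk1]] := step l m (prec_refl l) xl xm.
  have [k2 [xk2 hk12 hnk2]] := step k1 n hlk1 xk1 xn.
  exists k2; split => //; exact: prec_trans hmk1 hk12.
Qed.

Lemma Z_FA (l : L) : compact (Zset l : set X) -> FA L l.
Proof.
move=> cZ m n hm.
pose K := Zset l `&` [set y : X | y m = true] `&` [set y : X | y n = true].
have cK : compact K.
  apply: compact_closedI; last exact: closed_coord.
  apply: compact_closedI => //; exact: closed_coord.
have hK : forall y : X, K y -> exists k, [/\ y k, prec m k & prec n k].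
  move=> y [[[[_ _ dir] _] ym] yn]; exact: dir.
have hex : forall y : X, exists k : L, K y -> [/\ y k, prec m k & prec n k].
  move=> y; case: (pselect (K y)) => [/hK [k hk]|nK]; first by exists k.
  by exists l.
have [kap hkap] := boolp.choice hex.
have cc : @cover_compact (PX L) K.
  by rewrite -(@compact_cover (PX L)); exact: cK.
move: cc => /(_ X K (fun y => [set z : X | z (kap y) = true])).
case => [y _|y Ky|D' sD' cov]; first exact: open_coord.
  by exists y => //; have [] := hkap y Ky.
pose E : set X := [set` D'].
have fE : finite_set E by exact: finite_fset.
exists (kap @` E); split; first exact: finite_image.
apply/seteqP; split.
- move=> a [ma na].
  pose p : X := fun b => `[< prec b a >].
  have Kp : K p.
    split; [split; [split|]|].
    + split.
      * by exists a; apply: asboolT; exact: prec_refl.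
      * move=> b c hbc /asboolP hca; apply: asboolT; exact: prec_trans hbc hca.
      * move=> b c /asboolP hb /asboolP hc; exists a; split => //.
        by apply: asboolT; exact: prec_refl.
    + apply: asboolT; exact: prec_trans hm ma.
    + by apply: asboolT.
    + by apply: asboolT.
  have [y D'y /= /asboolP hy] := cov p Kp.
  by exists (kap y) => //; exists y.
- move=> a [k [y D'y <-] hka].
  have Ky : K y by have := sD' y D'y; rewrite in_setE. 
  have [_ hmk hnk] := hkap y Ky.
  by split; [exact: prec_trans hmk hka | exact: prec_trans hnk hka].
Qed.

End S.

Theorem lemma4p8 (G : wqlo_group) (L : Pgraph G) :
  FA L !=set0 ->
  forall l : L,
    FA L l <-> @compact (subspace (filters L)) (Zset l).
Proof.
move=> _ l.
have e : Zset l `&` filters L = Zset l by apply/setIidl => y [].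
have := @compact_subspaceIP {ptws L -> bool} (filters L) (Zset l).
rewrite e => ->.
split; last exact: (@Z_FA G L l).
move=> hFA; apply: (subclosed_compact (@Z_closed G L l hFA) (@compactT G L)) => //.
Qed.
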